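(* Let $M$ be an $n\times n$ complex matrix, $k\in\{3,\dots,n-1\}$ and $p$ a positive integer with $p\leq k$. If $M$ is $k$-spectrally monomorphic, then for every subset $\beta\subseteq[n]$ with $|\beta|\leq n-k$, the number \[ \sum_{\alpha\supseteq\beta,\ |\alpha|=p}\det(M[\alpha]) \] (sum over subsets $\alpha\subseteq[n]$ of size $p$ containing $\beta$) depends only on the cardinality of $\beta$.
   Context: $[n]=\{1,\dots,n\}$. For $\alpha\subseteq[n]$, $M[\alpha]$ is the principal submatrix of $M$ with rows and columns indexed by $\alpha$. A square matrix is $k$-spectrally monomorphic if all its $k\times k$ principal submatrices have the same characteristic polynomial $\det(zI-M[\alpha])$. *)

(* Defs.v *)
From HB Require Import structures.
From mathcomp Require Import all_boot all_order all_algebra.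
From mathcomp Require Import reals.
From mathcomp Require Export complex.
Set Implicit Arguments. Unset Strict Implicit. Unset Printing Implicit Defensive.
Import Order.TTheory GRing.Theory Num.Theory.
Local Open Scope ring_scope.

(* Principal submatrix M[alpha]: rows and columns indexed by alpha, listed in
   increasing order (enum of 'I_n is increasing). *)
Definition psubmx (F : Type) (n : nat) (M : 'M[F]_n) (A : {set 'I_n}) : 'M[F]_#|A| :=
  \matrix_(i < #|A|, j < #|A|) M (enum_val i) (enum_val j).

Definition spec_mono (F : comNzRingType) (n k : nat) (M : 'M[F]_n) : Prop :=
  forall A B : {set 'I_n}, #|A| = k -> #|B| = k ->
    char_poly (psubmx M A) = char_poly (psubmx M B).

(* Main.v *)
Require Import Defs.
From HB Require Import structures.
From mathcomp Require Import all_boot all_order all_algebra.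
From mathcomp Require Import reals complex.
From mathcomp Require Import all_fingroup zify.
Import Order.TTheory GRing.Theory Num.Theory.
Local Open Scope ring_scope.

Lemma base_sum (T : finType) (F : numFieldType) (g : {set T} -> F) k p :
  (p <= k)%N ->
  (forall G : {set T}, #|G| = k -> \sum_(A : {set T} | (A \subset G) && (#|A| == p)) g A = 0) ->
  forall U : {set T}, (k <= #|U|)%N -> \sum_(A : {set T} | (A \subset U) && (#|A| == p)) g A = 0.
Proof.
move=> pk H U; have [m] := ubnP #|U|; elim: m U => // m IH U hU kU.
have [kU'|Uk] := ltnP k #|U|; last first.
  by apply: H; apply/eqP; rewrite eqn_leq kU Uk.
set S := (X in X = 0).
have key : \sum_(x in U) \sum_(A : {set T} | (A \subset U :\ x) && (#|A| == p)) g A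
    = (#|U| - p)%:R * S.
  transitivity (\sum_(x in U) \sum_(A : {set T} | (A \subset U) && (#|A| == p))
                 (if x \notin A then g A else 0)).
    apply: eq_bigr => x _; rewrite big_mkcond [RHS]big_mkcond/=.
    apply: eq_bigr => A _; rewrite subsetD1.
    by case: (A \subset U); case: (x \in A); case: (#|A| == p).
  rewrite exchange_big /S mulr_sumr; apply: eq_bigr => A /andP[AU /eqP Ap].
  rewrite -big_mkcondr /= sumr_const.
  have -> : #|[pred x in U | x \notin A]| = (#|U| - p)%N.
    rewrite -Ap -(setIidPr AU) -cardsD; apply: eq_card => x.
    by rewrite !inE; case: (x \in U); case: (x \in A).
  by rewrite mulr_natl.
have z : \sum_(x in U) \sum_(A : {set T} | (A \subset U :\ x) && (#|A| == p)) g A = 0.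
  apply: big1 => x xU; apply: IH.
    by rewrite (cardsD1 x U) xU add1n ltnS in hU; apply: leq_ltn_trans hU.
  by move: kU'; rewrite (cardsD1 x U) xU add1n ltnS.
move: key; rewrite z => /esym/eqP; rewrite mulf_eq0 pnatr_eq0 subn_eq0.
by rewrite leqNgt (leq_ltn_trans pk kU') /= => /eqP.
Qed.

Lemma up_sum (T : finType) (F : numFieldType) (g : {set T} -> F) k p :
  (p <= k)%N ->
  (forall G : {set T}, #|G| = k -> \sum_(A : {set T} | (A \subset G) && (#|A| == p)) g A = 0) ->
  forall b (B U : {set T}), #|B| = b -> B \subset U -> (b + k <= #|U|)%N ->
  \sum_(A : {set T} | [&& B \subset A, A \subset U & #|A| == p]) g A = 0.
Proof.
move=> pk H; elim=> [|b IH] B U Bb BU bkU.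
  move/eqP: Bb; rewrite cards_eq0 => /eqP ->.
  rewrite -[RHS](@base_sum T F g k p pk H U bkU); apply: eq_bigl => A; by rewrite sub0set.
have /set0Pn [x xB] : B != set0 by rewrite -card_gt0 Bb.
have xU : x \in U by apply: (subsetP BU).
have B0b : #|B :\ x| = b by move: Bb; rewrite (cardsD1 x B) xB add1n => -[].
have B0U : B :\ x \subset U by apply: subset_trans BU; apply: subsetDl.
have S0 := IH _ _ B0b B0U (leq_trans (leq_addl 1 _) bkU).
have B0Ux : B :\ x \subset U :\ x by apply: setSD.
have S2 : \sum_(A : {set T} | [&& B :\ x \subset A, A \subset U :\ x & #|A| == p]) g A = 0.
  apply: IH => //; move: bkU; rewrite (cardsD1 x U) xU add1n addSn ltnS //.
move: S0; rewrite (bigID (fun A : {set T} => x \in A)) /= => S0.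
have E2 : \sum_(A : {set T} | [&& B :\ x \subset A, A \subset U & #|A| == p] && (x \notin A)) g A
   = 0.
  rewrite -[RHS]S2; apply: eq_bigl => A; rewrite subsetD1.
  by case: (B :\ x \subset A); case: (A \subset U); case: (x \in A); case: (#|A| == p).
rewrite E2 addr0 in S0; rewrite -[RHS]S0; apply: eq_bigl => A.
have -> : (B \subset A) = (x \in A) && (B :\ x \subset A).
  by rewrite -{1}(setD1K xB) subUset sub1set.
by case: (B :\ x \subset A); case: (A \subset U); case: (x \in A); case: (#|A| == p).
Qed.

Definition maskmx (R : comNzRingType) n (A : 'M[R]_n) (S : {set 'I_n}) : 'M[R]_n :=
  \matrix_(i, j) if (i \in S) && (j \in S) then A i j else (i == j)%:R.
Arguments maskmx {R n}.

Lemma det_reindex {R : comNzRingType} m n (e : m = n) (h : 'I_m -> 'I_n)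
   (X : 'M[R]_n) : injective h -> \det (\matrix_(i, j) X (h i) (h j)) = \det X.
Proof.
subst m => hinj; set s := perm hinj.
have -> : \matrix_(i, j) X (h i) (h j) = row_perm s (col_perm s X).
  by apply/matrixP => i j; rewrite !mxE !permE.
rewrite row_permE col_permE !det_mulmx !det_perm odd_permV.
by rewrite mulrC -mulrA -signr_addb addbb expr0 mulr1.
Qed.

Lemma det_psubmx_mask (R : comNzRingType) n (A : 'M[R]_n) (S : {set 'I_n}) :
  \det (psubmx A S) = \det (maskmx A S).
Proof.
have e : (#|S| + #|~: S| = n)%N by rewrite cardsC card_ord.
pose h (i : 'I_(#|S| + #|~: S|)) : 'I_n :=
  match split i with inl a => enum_val a | inr b => enum_val b end.
have hinj : injective h.
  move=> i j; rewrite /h -{2}(splitK i) -{2}(splitK j).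
  case: (split i) => a; case: (split j) => b.
  - by move/enum_val_inj => ->.
  - move=> E; have := enum_valP a; have := enum_valP b.
    by rewrite E inE => /negP.
  - move=> E; have := enum_valP a; have := enum_valP b.
    by rewrite E inE => ? /negP.
  - by move/enum_val_inj => ->.
rewrite -(@det_reindex R _ _ e h (maskmx A S) hinj).
have -> : \matrix_(i, j) maskmx A S (h i) (h j) = block_mx (psubmx A S) 0 0 1%:M.
  have sl a : split (lshift #|~: S| a) = inl a := unsplitK (inl _ a).
  have sr a : split (rshift #|S| a) = inr a := unsplitK (inr _ a).
  apply/matrixP => i j; rewrite -(splitK i) -(splitK j).
  case: (split i) => i'; case: (split j) => j' /=;
    rewrite mxE /h ?sl ?sr ?block_mxEul ?block_mxEur ?block_mxEdl ?block_mxEdr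
      !mxE ?enum_valP.
  - by [].
  - have := enum_valP j'; rewrite inE => /negPf Pj; rewrite Pj /=.
    by case: eqP => // E; move: Pj; rewrite -E enum_valP.
  - have := enum_valP i'; rewrite inE => /negPf Pi; rewrite Pi /=.
    by case: eqP => // E; move: Pi; rewrite E enum_valP.
  - have := enum_valP i'; rewrite inE => /negPf ->.
    by rewrite (inj_eq enum_val_inj).
by rewrite det_ublock det1 mulr1.
Qed.

Lemma psubmx_cpoly (F : comNzRingType) n (M : 'M[F]_n) S :
  char_poly (psubmx M S) = \det (maskmx (char_poly_mx M) S).
Proof.
rewrite -det_psubmx_mask /char_poly; congr (\det _); apply/matrixP => i j.
by rewrite !mxE (inj_eq enum_val_inj).
Qed.

Lemma det_mask_cpoly (F : comNzRingType) n (M : 'M[F]_n) (G : {set 'I_n}) :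
  \det (maskmx (char_poly_mx M) G) =
  \sum_(J : {set 'I_n} | J \subset G) 'X^(#|G| - #|J|) * (\det (maskmx (- M) J))%:P.
Proof.
rewrite /determinant.
under [RHS]eq_bigr => J _ do rewrite rmorph_sum mulr_sumr.
rewrite exchange_big /=; apply: eq_bigr => s _.
under [RHS]eq_bigr => J _ do rewrite rmorphM rmorph_sign mulrCA.
rewrite -mulr_sumr; congr (_ * _).
pose Gf i : {poly F} := if (i \in G) && (s i \in G) then ((- M) i (s i))%:P else 0.
pose Ff i : {poly F} := (i == s i)%:R * (if i \in G then 'X else 1).
transitivity (\prod_i (Gf i + Ff i)).
  apply: eq_bigr => i _; rewrite /Gf /Ff !mxE.
  case: (i =P s i) => [E|NE].
    rewrite -E andbb; case: (i \in G) => /=.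
      by rewrite mulr1n polyCN mul1r addrC.
    by rewrite add0r mul1r.
  rewrite mulr0n mul0r addr0.
  case: (i \in G) => //=; case: (s i \in G) => //=.
  by rewrite sub0r polyCN.
rewrite (bigA_distr 1 +%R).
transitivity (\sum_(J : {set 'I_n}) \prod_i (if i \in J then Gf i else Ff i)).
  by apply: eq_big => // J; rewrite inE.
rewrite (bigID (fun J : {set 'I_n} => J \subset G)) /=.
rewrite [X in _ + X]big1 ?addr0; last first.
  move=> J /subsetPn [i iJ iG].
  rewrite (bigD1 i) //= iJ /Gf (negPf iG) /=; by rewrite mul0r.
apply: eq_bigr => J JG.
have [fixJ | /forallPn [i0]] := boolP [forall i, (i \notin J) ==> (s i == i)]; last first.
  rewrite negb_imply => /andP [i0J si0].
  rewrite (bigD1 i0) //= (negPf i0J) /Ff eq_sym (negPf si0) mul0r mul0r.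
  rewrite (bigD1 i0) //= mxE (negPf i0J) /= eq_sym (negPf si0) mul0r.
  by rewrite polyC0 mulr0.
have fixJ' i : i \notin J -> s i = i by move=> iJ; apply/eqP; exact: (implyP (forallP fixJ i)).
have sJ i : i \in J -> s i \in J.
  move=> iJ; apply/negPn/negP => siJ.
  have := fixJ' _ siJ => /perm_inj E.
  by move: siJ; rewrite E iJ.
rewrite (bigID (fun i => i \in J)) /=.
rewrite [in RHS](bigID (fun i => i \in J)) /= rmorphM !rmorph_prod /=.
rewrite [X in _ = _ * (_ * X)]big1 ?mulr1; last first.
  by move=> i iJ; rewrite mxE (negPf iJ) /= fixJ' // eqxx.
rewrite [RHS]mulrC; congr (_ * _).
  apply: eq_bigr => i iJ; rewrite ifT // /Gf mxE ifT.
    by rewrite /maskmx mxE ifT ?mxE // iJ sJ.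
  by rewrite (subsetP JG _ iJ) (subsetP JG _ (sJ _ iJ)).
transitivity (\prod_(i in G :\: J) 'X : {poly F}).
  rewrite [in RHS]big_mkcond /=; rewrite [in LHS]big_mkcond /=.
  apply: eq_bigr => i _.
  case iJ: (i \in J) => /=; first by rewrite inE iJ.
  rewrite /Ff fixJ' ?iJ // eqxx mul1r inE iJ /=.
  by case: (i \in G).
by rewrite prodr_const cardsD (setIidPr JG).
Qed.

Lemma card_sup (T : finType) (B : {set T}) p :
  #|[set A : {set T} | (B \subset A) && (#|A| == p)]| =
  if (#|B| <= p)%N then 'C(#|T| - #|B|, p - #|B|) else 0%N.
Proof.
case: leqP => bp; last first.
  apply: eq_card0 => A; rewrite inE; apply/andP => -[BA /eqP Ap].
  have := subset_leq_card BA; lia.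
have -> : (#|T| - #|B| = #|~: B|)%N by rewrite -(cardsC B); lia.
rewrite -cards_draws.
have -> : [set A : {set T} | (B \subset A) && (#|A| == p)] =
    [set D :|: B | D in [set D : {set T} | (D \subset ~: B) && (#|D| == (p - #|B|)%N)]].
  apply/setP => A; rewrite inE; apply/andP/imsetP.
    move=> [BA /eqP Ap]; exists (A :\: B).
      by rewrite inE subsetDr cardsD (setIidPr BA) Ap eqxx.
    apply/setP => x; rewrite !inE; case xB: (x \in B) => /=; last by rewrite orbF.
    by rewrite (subsetP BA x xB).
  move=> [D]; rewrite inE => /andP [DB /eqP Dp] ->; split; first exact: subsetUr.
  rewrite cardsU Dp disjoint_setI0 ?cards0 ?disjoints_subset //; apply/eqP; lia.
rewrite card_in_imset; first by apply: eq_card => D; rewrite !inE.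
move=> D1 D2; rewrite !inE => /andP [D1B _] /andP [D2B _] E.
apply/setP => x; move/setP: E => /(_ x); rewrite !inE.
case xB: (x \in B); last by rewrite !orbF.
have n1 : x \notin D1 by apply/negP => /(subsetP D1B); rewrite inE xB.
have n2 : x \notin D2 by apply/negP => /(subsetP D2B); rewrite inE xB.
by rewrite (negPf n1) (negPf n2).
Qed.

Lemma coef_cpoly (F : comNzRingType) n (M : 'M[F]_n) (G : {set 'I_n}) p :
  (p <= #|G|)%N ->
  (char_poly (psubmx M G))`_(#|G| - p) =
  \sum_(J : {set 'I_n} | (J \subset G) && (#|J| == p)) \det (maskmx (- M) J).
Proof.
move=> pG; rewrite psubmx_cpoly det_mask_cpoly coef_sum [RHS]big_mkcondr /=.
apply: eq_bigr => J JG; rewrite coefXnM coefC.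
have := subset_leq_card JG => JlG.
case: (#|J| =P p) => [<-|ne].
  by rewrite ltnn subnn eqxx.
case: ltnP => // h; rewrite ifF //; apply/negbTE; rewrite subn_eq0; apply/negP => h2; apply: ne.
have e : (#|G| - #|J| = #|G| - p)%N by apply/eqP; rewrite eqn_leq h h2.
by rewrite -(subKn JlG) e subKn.
Qed.

Theorem proposition2p3 (R : realType) (n k p : nat) (M : 'M[complex R]_n) :
  (3 <= k)%N -> (k <= n - 1)%N -> (0 < p)%N -> (p <= k)%N ->
  spec_mono k M ->
  forall beta1 beta2 : {set 'I_n},
    (#|beta1| <= n - k)%N -> #|beta1| = #|beta2| ->
    \sum_(alpha : {set 'I_n} | (beta1 \subset alpha) && (#|alpha| == p))
        \det (psubmx M alpha)
    = \sum_(alpha : {set 'I_n} | (beta2 \subset alpha) && (#|alpha| == p))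
        \det (psubmx M alpha).
Proof.
move=> k3 kn p0 pk sm b1 b2 hb1 hb12.
pose E (G : {set 'I_n}) :=
  \sum_(A : {set 'I_n} | (A \subset G) && (#|A| == p)) \det (psubmx M A).
have EC (G : {set 'I_n}) : #|G| = k -> (char_poly (psubmx M G))`_(k - p) = (-1) ^+ p * E G.
  move=> Gk; rewrite -Gk coef_cpoly ?Gk // /E mulr_sumr.
  apply: eq_bigr => J /andP [_ /eqP Jp].
  rewrite -det_psubmx_mask (_ : psubmx (- M) J = (-1) *: psubmx M J) ?detZ.
  by rewrite [in (-1) ^+ #|J|]Jp.
  by apply/matrixP => i j; rewrite !mxE mulN1r.
have [G0 G0k] : exists G0 : {set 'I_n}, #|G0| = k.
  have : (0 < #|[set A : {set 'I_n} | #|A| == k]|)%N.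
    rewrite card_draws card_ord bin_gt0; lia.
  by move/card_gt0P => [G0]; rewrite inE => /eqP; exists G0.
have Econst (G : {set 'I_n}) : #|G| = k -> E G = E G0.
  move=> Gk; apply: (inv_inj (signrMK p)); rewrite -!EC //.
  by rewrite (sm G G0 Gk G0k).
pose c := E G0 / ('C(k, p))%:R.
have Cnz : ('C(k, p)%:R : complex R) != 0 by rewrite pnatr_eq0 -lt0n bin_gt0.
pose g A := \det (psubmx M A) - c.
have Hg (G : {set 'I_n}) : #|G| = k -> \sum_(A : {set 'I_n} | (A \subset G) && (#|A| == p)) g A = 0.
  move=> Gk; rewrite sumrB -/(E G) Econst //.
  rewrite (sumr_const [pred A : {set 'I_n} | (A \subset G) && (#|A| == p)]).
  have -> : #|[pred A : {set 'I_n} | (A \subset G) && (#|A| == p)]| = 'C(k, p).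
    by rewrite -Gk -cards_draws; apply: eq_card => A; rewrite inE.
  by rewrite /c -(mulr_natr (E G0 / _)) divfK // subrr.
have key (B : {set 'I_n}) : (#|B| <= n - k)%N ->
  \sum_(A : {set 'I_n} | (B \subset A) && (#|A| == p)) \det (psubmx M A) =
  c *+ #|[set A : {set 'I_n} | (B \subset A) && (#|A| == p)]|.
  move=> hB.
  have Z := @up_sum _ _ g k p pk Hg #|B| B setT erefl (subsetT B).
  have {}Z : \sum_(A : {set 'I_n} | (B \subset A) && (#|A| == p)) g A = 0.
    rewrite -[RHS]Z; last by rewrite cardsT card_ord; lia.
    by apply: eq_bigl => A; rewrite subsetT.
  transitivity (\sum_(A : {set 'I_n} | (B \subset A) && (#|A| == p)) (g A + c)).
    by apply: eq_bigr => A _; rewrite /g subrK.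
  rewrite big_split /= Z add0r.
  rewrite (sumr_const [pred A : {set 'I_n} | (B \subset A) && (#|A| == p)]).
  by congr (_ *+ _); apply: eq_card => A; rewrite inE.
rewrite key // key -?hb12 // !card_sup hb12 //.
Qed.
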